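(* Let $D,Q,P$ be simplicial abelian groups and $s\colon D\to P$, $f\colon Q\to P$ simplicial homomorphisms. Suppose $D$ is free and $m$-connected ($m\in\mathbb N$) and $f$ is surjective. Then there exists a simplicial homomorphism $t\colon D\to Q$ such that $f\circ t|_{D_{(m)}}=s|_{D_{(m)}}$.
   Context: A simplicial abelian group $D$ is free if each $D_q$ is a free abelian group. $D_{(m)}\subset D$ denotes the $m$-skeleton (the simplicial subset generated by simplices of dimension $\le m$). *)

(* Defs.v *)
From HB Require Import structures.
From mathcomp Require Import all_boot all_order all_algebra.
Unset Printing Implicit Defensive.
Import GRing.Theory.
Local Open Scope ring_scope.

(* Indices out of range
   are junk and never constrained nor used. *)
Record sAb := SAb {
  sob :> nat -> zmodType;
  sface : forall n, nat -> sob n.+1 -> sob n;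
  sdeg : forall n, nat -> sob n -> sob n.+1;
  sface_add : forall n i, (i <= n.+1)%N ->
    forall x y : sob n.+1, sface n i (x - y) = sface n i x - sface n i y;
  sdeg_add : forall n i, (i <= n)%N ->
    forall x y : sob n, sdeg n i (x - y) = sdeg n i x - sdeg n i y;
  sface_face : forall n i j, (i < j)%N -> (j <= n.+2)%N -> forall x,
    sface n i (sface n.+1 j x) = sface n j.-1 (sface n.+1 i x);
  sdeg_deg : forall n i j, (i <= j)%N -> (j <= n)%N -> forall x,
    sdeg n.+1 i (sdeg n j x) = sdeg n.+1 j.+1 (sdeg n i x);
  sface_deg_lt : forall n i j, (i < j)%N -> (j <= n.+1)%N -> forall x,
    sface n.+1 i (sdeg n.+1 j x) = sdeg n j.-1 (sface n i x);
  sface_deg_eq : forall n j, (j <= n)%N -> forall x,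
    sface n j (sdeg n j x) = x;
  sface_deg_eqS : forall n j, (j <= n)%N -> forall x,
    sface n j.+1 (sdeg n j x) = x;
  sface_deg_gt : forall n i j, (j.+1 < i)%N -> (i <= n.+2)%N -> forall x,
    sface n.+1 i (sdeg n.+1 j x) = sdeg n j (sface n i.-1 x)
}.

Record sHom (D E : sAb) := SHom {
  hmap :> forall n, D n -> E n;
  hmap_add : forall n (x y : D n), hmap n (x - y) = hmap n x - hmap n y;
  hmap_face : forall n i, (i <= n.+1)%N -> forall x,
    hmap n (sface D n i x) = sface E n i (hmap n.+1 x);
  hmap_deg : forall n i, (i <= n)%N -> forall x,
    hmap n.+1 (sdeg D n i x) = sdeg E n i (hmap n x)
}.

Definition free_zmod (V : zmodType) : Prop :=
  exists (I : eqType) (b : I -> V),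
    (forall v : V, exists (s : seq I) (c : I -> int),
        v = \sum_(i <- s) b i *~ c i) /\
    (forall (s : seq I) (c : I -> int), uniq s ->
        \sum_(i <- s) b i *~ c i = 0 -> forall i, i \in s -> c i = 0).

Definition sfree (D : sAb) : Prop := forall q, free_zmod (D q).

(* Homotopy groups via the normalized Moore complex:
   N_n = {x in D_n | d_i x = 0 for 1 <= i <= n}, differential d_0,
   pi_n(D) = H_n(N D).  pi_n(D) = 0 means: every x in D_n with d_i x = 0 for
   all 0 <= i <= n is d_0 y for some y in D_{n+1} with d_i y = 0 for
   1 <= i <= n+1.  (For n = 0 there are no faces on D_0.) *)
Definition cycleN (D : sAb) (n : nat) (x : D n) : Prop :=
  match n return D n -> Prop with
  | 0 => fun _ => True
  | k.+1 => fun x => forall i, (i <= k.+1)%N -> sface D k i x = 0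
  end x.

Definition pi_trivial (D : sAb) (n : nat) : Prop :=
  forall x : D n, cycleN D n x ->
    exists y : D n.+1,
      (forall i, (1 <= i <= n.+1)%N -> sface D n i y = 0) /\ sface D n 0 y = x.

Definition sconnected (m : nat) (D : sAb) : Prop :=
  forall i, (i <= m)%N -> pi_trivial D i.

Definition ssurj (D E : sAb) (f : sHom D E) : Prop :=
  forall n (y : E n), exists x : D n, f n x = y.

Inductive in_skel (D : sAb) (m : nat) : forall q, D q -> Prop :=
| skel_base : forall q (x : D q), (q <= m)%N -> in_skel D m _ x
| skel_face : forall q i (x : D q.+1), (i <= q.+1)%N -> in_skel D m _ x ->
    in_skel D m _ (sface D q i x)
| skel_deg : forall q i (x : D q), (i <= q)%N -> in_skel D m _ x ->
    in_skel D m _ (sdeg D q i x).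

(* Main.v *)
Require Import Defs.
From mathcomp Require Import all_boot all_order all_algebra.
From mathcomp Require Import zify.
From Stdlib Require Import ClassicalEpsilon.
Import GRing.Theory.
Local Open Scope ring_scope.

Definition addfun {U V : zmodType} (g : U -> V) := forall x y, g (x - y) = g x - g y.

Section AddF.
Variables (U V : zmodType) (g : U -> V) (Hg : addfun g).
Lemma addf0 : g 0 = 0.
Proof. by rewrite -(subrr 0) Hg subrr. Qed.
Lemma addfN x : g (- x) = - g x.
Proof. by rewrite -sub0r Hg addf0 sub0r. Qed.
Lemma addfD x y : g (x + y) = g x + g y.
Proof. have -> : x + y = x - (- y) by rewrite opprK.
by rewrite Hg addfN opprK. Qed.
Lemma addf_sum I (r : seq I) (P : pred I) F :
  g (\sum_(i <- r | P i) F i) = \sum_(i <- r | P i) g (F i).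
Proof.
elim: r => [|a r IH]; first by rewrite !big_nil addf0.
by rewrite !big_cons; case: (P a) => //; rewrite addfD IH.
Qed.
Lemma addfMn x n : g (x *+ n) = g x *+ n.
Proof. elim: n => [|n IH]; by rewrite ?mulr0n ?addf0 // !mulrS addfD IH. Qed.
Lemma addfMz x n : g (x *~ n) = g x *~ n.
Proof. case: n => n; by rewrite ?NegzE ?mulrNz ?addfN ?mulrz_nat addfMn. Qed.
End AddF.
Arguments addf0 {U V g}. Arguments addfN {U V g}. Arguments addfD {U V g}.
Arguments addf_sum {U V g}. Arguments addfMn {U V g}. Arguments addfMz {U V g}.

Lemma addf_comp (U V W : zmodType) (g : U -> V) (h : V -> W) :
  addfun g -> addfun h -> addfun (fun x => h (g x)).
Proof. by move=> Hg Hh x y; rewrite Hg Hh. Qed.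

Section Free.
Variables (I : eqType) (V : zmodType).
Definition ev (g : I -> V) (l : seq (I * int)) := \sum_(p <- l) g p.1 *~ p.2.
Definition co (l : seq (I * int)) i := \sum_(p <- l) (if p.1 == i then p.2 else 0).

Lemma ev_co g l u : uniq u -> {subset map fst l <= u} ->
  ev g l = \sum_(i <- u) g i *~ co l i.
Proof.
move=> Uu; elim: l => [|p l IH] sub.
  rewrite /ev big_nil; under eq_bigr do rewrite /co big_nil mulr0z.
  by rewrite big1.
rewrite /ev big_cons -/(ev g l) IH; last by move=> x xl; apply: sub; rewrite inE xl orbT.
have pu : p.1 \in u by apply: sub; rewrite inE eqxx.
rewrite /co; under [RHS]eq_bigr do rewrite big_cons mulrzDr_tmp.
rewrite big_split /=; congr (_ + _).
rewrite (bigD1_seq p.1) //= eqxx big1 ?addr0 // => i; rewrite eq_sym => /negbTE ->; by rewrite mulr0z.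
Qed.

Definition negl (l : seq (I * int)) := map (fun p => (p.1, - p.2)) l.
Lemma ev_cat g l1 l2 : ev g (l1 ++ l2) = ev g l1 + ev g l2.
Proof. by rewrite /ev big_cat. Qed.
Lemma ev_negl g l : ev g (negl l) = - ev g l.
Proof.
rewrite /ev big_map /= -sumrN; apply: eq_bigr => p _; by rewrite mulrNz.
Qed.
End Free.
Arguments ev {I V}. Arguments co {I}. Arguments negl {I}.
Arguments ev_co {I V}. Arguments ev_cat {I V}. Arguments ev_negl {I V}.

Lemma ev_uniq (I : eqType) (V Y : zmodType) (b : I -> V) (y : I -> Y) :
  (forall (s : seq I) (c : I -> int), uniq s ->
        \sum_(i <- s) b i *~ c i = 0 -> forall i, i \in s -> c i = 0) ->
  forall l1 l2, ev b l1 = ev b l2 -> ev y l1 = ev y l2.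
Proof.
move=> ind l1 l2 e.
set l := l1 ++ negl l2.
have u1 : uniq (undup (map fst l)) by apply: undup_uniq.
have u2 : {subset map fst l <= undup (map fst l)} by move=> x; rewrite mem_undup.
have : ev b l = 0 by rewrite ev_cat ev_negl e subrr.
rewrite (ev_co _ _ _ u1 u2) => /(ind _ _ u1) c0.
apply/eqP; rewrite -subr_eq0 -ev_negl -ev_cat -/l (ev_co _ _ _ u1 u2).
by rewrite big_seq big1 // => i /c0 ->; rewrite mulr0z.
Qed.

Lemma free_lift (V W Y : zmodType) (r : V -> W) (phi : Y -> W) (S : Y -> Prop) :
  free_zmod V -> addfun r -> addfun phi -> S 0 -> (forall a b, S a -> S b -> S (a - b)) ->
  (forall v, exists y, S y /\ phi y = r v) ->
  exists H : V -> Y, addfun H /\ (forall v, S (H v)) /\ (forall v, phi (H v) = r v).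
Proof.
move=> [I [b [span ind]]] Hr Hphi S0 SB lift.
pose yb i := epsilon (inhabits (0 : Y)) (fun y => S y /\ phi y = r (b i)).
have ybP i : S (yb i) /\ phi (yb i) = r (b i).
  by apply: (epsilon_spec (inhabits (0:Y)) (fun y => S y /\ phi y = r (b i))); apply: lift.
have repE v : exists l, v = ev b l.
  have [s [c ->]] := span v.
  by exists (map (fun i => (i, c i)) s); rewrite /ev big_map.
pose rep v := epsilon (inhabits [::]) (fun l => v = ev b l).
have repP v : v = ev b (rep v) by apply: (epsilon_spec (inhabits [::]) (fun l => v = ev b l)).
have SD a c : S a -> S c -> S (a + c).
  move=> Sa Sc; have -> : a + c = a - (0 - c) by rewrite sub0r opprK.
  by apply: (SB) => //; apply: (SB).
have Sn a n : S a -> S (a *+ n).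
  by move=> Sa; elim: n => [|n IH]; rewrite ?mulr0n // mulrS; apply: (SD).
have Sz a n : S a -> S (a *~ n).
  move=> Sa; case: n => n; rewrite ?NegzE ?mulrNz ?mulrz_nat; first by apply: (Sn).
  by rewrite -sub0r; apply: (SB) => //; apply: (Sn).
have Sev l : S (ev yb l).
  elim: l => [|p l IH]; first by rewrite /ev big_nil.
  by rewrite /ev big_cons; apply: (SD) => //; apply: Sz; case: (ybP p.1).
exists (fun v => ev yb (rep v)); split; last split.
- move=> v w; rewrite -ev_negl -ev_cat; apply: (@ev_uniq I V Y b yb ind).
  by rewrite ev_cat ev_negl -!repP.
- by move=> v; apply: Sev.
- move=> v; rewrite [in RHS](repP v) /ev (addf_sum Hphi) (addf_sum Hr).
  apply: eq_bigr => p _; rewrite (addfMz Hphi) (addfMz Hr).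
  by case: (ybP p.1) => _ ->.
Qed.

Lemma subACA (V : zmodType) (a b c d : V) : (a - b) - (c - d) = (a - c) - (b - d).
Proof. by rewrite !opprD !opprK addrACA. Qed.

Section Simp.
Variable E : sAb.

Lemma face_addf n i : (i <= n.+1)%N -> addfun (sface E n i).
Proof. by move=> H x y; apply: sface_add. Qed.
Lemma deg_addf n i : (i <= n)%N -> addfun (sdeg E n i).
Proof. by move=> H x y; apply: sdeg_add. Qed.
Lemma face0 n i : (i <= n.+1)%N -> sface E n i 0 = 0.
Proof. by move/face_addf/addf0. Qed.
Lemma deg0 n i : (i <= n)%N -> sdeg E n i 0 = 0.
Proof. by move/deg_addf/addf0. Qed.

Fixpoint Xr (n r : nat) (x : E n.+1) : E n.+1 :=
  match r with
  | 0 => x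
  | r'.+1 => let y := Xr n r' x in
      y - sdeg E n (n - r') (sface E n (n - r').+1 y)
  end.

Definition aa n r (x : E n.+1) : E n := sface E n (n - r).+1 (Xr n r x).

Definition inN n (x : E n.+1) := forall i, (0 < i <= n.+1)%N -> sface E n i x = 0.
Arguments inN {n}.

Lemma Xr_addf n r : addfun (Xr n r).
Proof.
elim: r => [|r IH] x y //=.
rewrite IH (face_addf _ _ _) ?ltnS ?leq_subr // (deg_addf _ _ _) ?leq_subr //.
by rewrite subACA.
Qed.

Lemma aa_addf n r : addfun (aa n r).
Proof.
by move=> x y; rewrite /aa Xr_addf (face_addf _ _ _) // ltnS leq_subr.
Qed.

Lemma fsd_zero n i j (y : E n.+1) : (j.+1 < i)%N -> (i <= n.+1)%N ->
  sface E n i y = 0 -> sface E n i (sdeg E n j (sface E n j.+1 y)) = 0.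
Proof.
case: n y => [|n] y ji iS Hy.
  by move: (leq_trans ji iS).
rewrite sface_deg_gt // -(sface_face _ _ j.+1 i) // Hy face0 ?deg0 //.
- by rewrite -ltnS -ltnS (leq_trans ji).
- by rewrite -ltnS (leq_trans ji).
Qed.

Lemma Xr_face n r x i : (n.+1 - r < i)%N -> (i <= n.+1)%N -> sface E n i (Xr n r x) = 0.
Proof.
elim: r i => [|r IH] i; first by rewrite subn0 => /leq_trans H /H; rewrite ltnn.
rewrite subSS => lt iS /=.
set y := Xr n r x.
have jn : (n - r <= n)%N by rewrite leq_subr.
rewrite (face_addf _ _ _) //.
case: (ltngtP i (n - r).+1) => [ilt|igt|->].
- by move: (leq_ltn_trans lt ilt); rewrite ltnn.
- rewrite IH //; last by lia.
  rewrite fsd_zero ?subrr //; apply: IH => //; lia.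
- by rewrite sface_deg_eqS // subrr.
Qed.

Lemma Xr_decomp n R x :
  x = Xr n R x + \sum_(r < R) sdeg E n (n - r) (aa n r x).
Proof.
elim: R => [|R IH]; first by rewrite big_ord0 addr0.
rewrite {1}IH big_ord_recr /= /aa.
by rewrite [RHS]addrCA subrK addrC.
Qed.

Lemma Xr_N n r x : inN x -> Xr n r x = x.
Proof.
move=> Nx; elim: r => [|r IH] //=.
rewrite IH Nx ?deg0 ?subr0 //; lia.
Qed.

Lemma aa_N n r x : inN x -> aa n r x = 0.
Proof. move=> Nx; rewrite /aa Xr_N // Nx //; lia. Qed.

Definition Yr n r : E n -> E n :=
  match n return E n -> E n with 0 => fun z => z | n'.+1 => Xr n' r end.

Lemma Xr_deg n j r z : (j <= n)%N -> (r <= n - j)%N ->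
  Xr n r (sdeg E n j z) = sdeg E n j (Yr n r z).
Proof.
case: n z j => [|n] z j Hj.
  by rewrite sub0n leqn0 => /eqP ->.
elim: r => [|r IH] Hr //=.
rewrite IH; last by lia.
have eq : (n.+1 - r = (n - r).+1)%N by lia.
rewrite eq sface_deg_gt; [|lia|lia].
rewrite -sdeg_deg; [|lia|lia].
by rewrite -(deg_addf _ _ _).
Qed.
Lemma Xr_after n r k x : Xr n r x = 0 -> Xr n (r + k) x = 0.
Proof.
move=> H; elim: k => [|k IH]; first by rewrite addn0.
by rewrite addnS /= IH face0 ?deg0 ?subr0 //; lia.
Qed.

Lemma Xr_degz n j r z : (j <= n)%N -> (n - j < r)%N -> Xr n r (sdeg E n j z) = 0.
Proof.
move=> jn lt.
have -> : r = ((n - j).+1 + (r - (n - j).+1))%N by lia.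
apply: Xr_after => /=.
rewrite Xr_deg // (_ : (n - (n - j) = j)%N); last by lia.
by rewrite sface_deg_eqS // subrr.
Qed.
End Simp.

Arguments inN {E n}.

Definition compat (E E' : sAb) n (F0 : E n -> E' n) (F1 : E n.+1 -> E' n.+1) :=
  [/\ addfun F0, addfun F1,
   (forall i x, (i <= n.+1)%N -> sface E' n i (F1 x) = F0 (sface E n i x)) &
   (forall j x, (j <= n)%N -> F1 (sdeg E n j x) = sdeg E' n j (F0 x))].
Arguments compat {E E' n}.

Section Nat.
Variables (E E' : sAb).

Lemma Xr_nat n (F0 : E n -> E' n) F1 r x : compat F0 F1 ->
  F1 (Xr E n r x) = Xr E' n r (F1 x).
Proof.
case=> a0 a1 hf hd; elim: r => [|r IH] //=.
rewrite a1 hd; last by lia.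
by rewrite -hf ?IH //; lia.
Qed.

Variable F : forall k, E k -> E' k.

Lemma Yr_nat n r z : (forall k, (k < n)%N -> compat (F k) (F k.+1)) ->
  F n (Yr E n r z) = Yr E' n r (F n z).
Proof.
case: n z => [|n] z // HF /=.
by apply: Xr_nat; apply: HF.
Qed.

Lemma aa_deg_nat n r j z : (forall k, (k < n)%N -> compat (F k) (F k.+1)) ->
  addfun (F n) -> (j <= n)%N ->
  F n (aa E n r (sdeg E n j z)) = aa E' n r (sdeg E' n j (F n z)).
Proof.
move=> HF aF jn; rewrite /aa.
case: (ltngtP r (n - j)) => [lt|gt|eq].
- rewrite !Xr_deg; [|lia|lia|lia|lia].
  move: HF aF z lt; case: n jn => [|n] jn HF aF z lt; first by lia.
  have [a0 a1 hf hd] := HF n (ltnSn n).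
  rewrite !sface_deg_gt; [|lia|lia|lia|lia].
  rewrite hd; last by lia.
  rewrite -hf; last by lia.
  by rewrite (Yr_nat _ _ _ HF).
- rewrite !Xr_degz // !face0 ?(addf0 aF) //; lia.
- rewrite !Xr_deg; [|lia|lia|lia|lia].
  have -> : (n - r = j)%N by lia.
  by rewrite !sface_deg_eqS // Yr_nat.
Qed.

Lemma fs_nat n i k w : (forall k, (k < n)%N -> compat (F k) (F k.+1)) ->
  (k <= n)%N -> (i <= n.+1)%N ->
  sface E' n i (sdeg E' n k (F n w)) = F n (sface E n i (sdeg E n k w)).
Proof.
move=> HF kn iS.
case: (ltngtP i k) => [lt|gt|->]; last by rewrite !sface_deg_eq.
- move: HF w; case: n kn iS => [|n] kn iS HF w; first by lia.
  have [a0 a1 hf hd] := HF n (ltnSn n).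
  rewrite !sface_deg_lt //.
  rewrite hd ?hf //; lia.
- case: (ltngtP i k.+1) => [lt2|gt2|->]; [lia| |by rewrite !sface_deg_eqS].
  move: HF w; case: n kn iS => [|n] kn iS HF w; first by lia.
  have [a0 a1 hf hd] := HF n (ltnSn n).
  rewrite !sface_deg_gt //.
  rewrite hd ?hf //; lia.
Qed.
End Nat.

Lemma inN_d0 (E : sAb) n (y : E n.+2) : inN y -> inN (sface E n.+1 0 y).
Proof.
move=> Ny i /andP [i0 iS].
by rewrite -(sface_face _ _ 0 i.+1) // Ny ?face0 //; lia.
Qed.

Lemma d0d0 (E : sAb) n (y : E n.+2) : inN y -> sface E n 0 (sface E n.+1 0 y) = 0.
Proof.
by move=> Ny; rewrite -(sface_face _ _ 0 1) // Ny ?face0.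
Qed.

Lemma Xr_pN (E : sAb) n (x : E n.+1) : inN (Xr E n n.+1 x).
Proof. move=> i /andP [i0 iS]; apply: Xr_face => //; lia. Qed.

Lemma inN0 (E : sAb) n : inN (0 : E n.+1).
Proof. by move=> i /andP [_ iS]; rewrite face0. Qed.

Lemma inNB (E : sAb) n (x y : E n.+1) : inN x -> inN y -> inN (x - y).
Proof. by move=> Nx Ny i /andP [i0 iS]; rewrite sface_add // Nx ?Ny ?subrr // i0. Qed.

Lemma hom_compat (D E : sAb) (h : sHom D E) n : compat (h n) (h n.+1).
Proof.
split; try by move=> *; apply: hmap_add.
- by move=> i x iS; rewrite hmap_face.
- by move=> j x jn; rewrite hmap_deg.
Qed.
Arguments Xr_nat {E E' n F0 F1} r x.
Arguments hom_compat {D E} h n.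

Section Main.
Variables (D Q P : sAb) (s : sHom D P) (f : sHom Q P) (m : nat).
Hypotheses (Dfree : sfree D) (Dconn : sconnected m D) (fsurj : ssurj Q P f).

Definition P0 (E : sAb) k : E k -> E k :=
  match k return E k -> E k with 0 => fun x => x | k'.+1 => Xr E k' k'.+1 end.

Lemma P0_addf (E : sAb) k : addfun (P0 E k).
Proof. by case: k => [|k] //; apply: Xr_addf. Qed.

Lemma P0_N (E : sAb) k (x : E k.+1) : inN (P0 E k.+1 x).
Proof. exact: Xr_pN. Qed.

Definition L k : D k -> Q k :=
  epsilon (inhabits (fun _ => 0)) (fun L => addfun L /\ forall x, f k (L x) = s k x).

Lemma L_spec k : addfun (L k) /\ forall x, f k (L k x) = s k x.
Proof.
apply: (epsilon_spec (inhabits (fun _ => 0)) (fun L => addfun L /\ forall x, f k (L x) = s k x)).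
have [H [aH [_ HH]]] := @free_lift (D k) (P k) (Q k) (s k) (f k) (fun _ => True)
   (Dfree k) (fun x y => @hmap_add _ _ s k x y) (fun x y => @hmap_add _ _ f k x y) I (fun _ _ _ _ => I)
   (fun v => let: ex_intro y e := fsurj k (s k v) in ex_intro _ y (conj I e)).
by exists H.
Qed.

Definition Lp k (x : D k) : Q k := P0 Q k (L k x).

Definition spec0 (H : D 0 -> D 1) :=
  [/\ addfun H, forall x, inN (H x) & forall c, sface D 0 0 (H c) = c].
Definition specS k (hp : D k -> D k.+1) (H : D k.+1 -> D k.+2) :=
  [/\ addfun H, forall x, inN (H x) &
      forall c, inN c -> sface D k.+1 0 (H c) + hp (sface D k 0 c) = c].
Arguments specS {k}.

Fixpoint hs k : D k -> D k.+1 :=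
  match k with
  | 0 => epsilon (inhabits (fun _ => 0)) spec0
  | k'.+1 => epsilon (inhabits (fun _ => 0)) (specS (hs k'))
  end.

Definition good k :=
  match k with 0 => spec0 (hs 0) | k'.+1 => specS (hs k') (hs k'.+1) end.

Lemma good_add k : good k -> addfun (hs k).
Proof. by case: k => [|k] []. Qed.

Lemma good_N k : good k -> forall x, inN (hs k x).
Proof. by case: k => [|k] []. Qed.

Lemma good0 : good 0.
Proof.
  apply: (epsilon_spec (inhabits (fun _ => 0)) spec0).
  have [H [aH [NH HH]]] := @free_lift (D 0) (D 0) (D 1) id (sface D 0 0) (@inN D 0)
     (Dfree 0) (fun x y => erefl) (face_addf _ _ _ (leq0n _)) (inN0 _ _) (@inNB _ _)
     (fun v => let: ex_intro y (conj e1 e2) := Dconn 0 (leq0n m) v I in ex_intro _ y (conj e1 e2)).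
  by exists H.
Qed.

Lemma good_step k : (k < m)%N -> (forall j, (j <= k)%N -> good j) -> good k.+1.
Proof.
move=> km IH.
have gk := IH k (leqnn k).
apply: (epsilon_spec (inhabits (fun _ => 0)) (specS (hs k))).
pose r (x : D k.+1) := P0 D k.+1 x - hs k (sface D k 0 (P0 D k.+1 x)).
have ar : addfun r.
  move=> x y; rewrite /r P0_addf (face_addf _ _ _) // (good_add _ gk).
  by rewrite subACA.
have rcyc x : cycleN D k.+1 (r x).
  move=> i; case: i => [|i] iS.
    rewrite /r sface_add //.
    move: gk IH; case: k {km ar r} x iS => [|k] x iS [ah Nh Hh] IH.
      by rewrite Hh subrr.
    have Nc : inN (sface D k.+1 0 (P0 D k.+2 x)) by apply: inN_d0; apply: Xr_pN.
    move: (Hh _ Nc); rewrite d0d0 ?(addf0 (good_add _ (IH k (leqnSn k)))) ?addr0; last exact: Xr_pN.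
    by move=> ->; rewrite subrr.
  rewrite /r sface_add // P0_N // (good_N _ gk) ?subrr //.
have [H [aH [NH HH]]] := @free_lift (D k.+1) (D k.+1) (D k.+2) r (sface D k.+1 0) (@inN D k.+1)
   (Dfree _) ar (face_addf _ _ _ (leq0n _)) (inN0 _ _) (@inNB _ _)
   (fun v => let: ex_intro y (conj e1 e2) := Dconn k.+1 km (r v) (rcyc v) in ex_intro _ y (conj e1 e2)).
exists H; split => // c Nc; rewrite HH /r.
by rewrite /P0 Xr_N // subrK.
Qed.

Lemma hs_good k : (k <= m)%N -> good k.
Proof.
have H : forall K, (K <= m)%N -> forall j, (j <= K)%N -> good j.
  elim=> [|K IH] Km j jK.
    by move: jK; rewrite leqn0 => /eqP ->; apply: good0.
  case: (ltngtP j K.+1) => [jlt|jgt|->]; first by apply: IH => //; lia.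
    by lia.
  by apply: good_step => //; apply: IH; lia.
by move=> km; apply: (H k).
Qed.

Definition h k (x : D k) : D k.+1 := if (k <= m)%N then hs k x else 0.

Lemma h_add k : addfun (h k).
Proof.
rewrite /h; case: (leqP k m) => km x y; last by rewrite subrr.
by rewrite (good_add _ (hs_good _ km)).
Qed.

Lemma h_N k x : inN (h k x).
Proof.
rewrite /h; case: (leqP k m) => km; last exact: inN0.
exact: (good_N _ (hs_good _ km)).
Qed.

Lemma h_c0 c : sface D 0 0 (h 0 c) = c.
Proof. by rewrite /h leq0n; case: (hs_good _ (leq0n m)). Qed.

Lemma h_cS k c : (k.+1 <= m)%N -> inN c ->
  sface D k.+1 0 (h k.+1 c) + h k (sface D k 0 c) = c.
Proof.
move=> km Nc; rewrite /h km (ltnW km).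
by case: (hs_good _ km) => _ _; apply.
Qed.

Lemma Lp_add k : addfun (Lp k).
Proof. by move=> x y; rewrite /Lp (proj1 (L_spec k)) P0_addf. Qed.

Lemma Lp_N k x : inN (Lp k.+1 x).
Proof. exact: P0_N. Qed.

Lemma f_Lp0 y : f 0 (Lp 0 y) = s 0 y.
Proof. by rewrite /Lp /= (proj2 (L_spec 0)). Qed.

Lemma f_Lp k y : inN y -> f k.+1 (Lp k.+1 y) = s k.+1 y.
Proof.
move=> Ny; rewrite /Lp /P0 (Xr_nat _ _ (hom_compat f k)) (proj2 (L_spec _)).
by rewrite -(Xr_nat _ _ (hom_compat s k)) Xr_N.
Qed.

Arguments Lp k x : simpl never.
Arguments h k x : simpl never.

Definition T k : D k -> Q k :=
  match k return D k -> Q k with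
  | 0 => fun c => sface Q 0 0 (Lp 1 (h 0 c))
  | k'.+1 => fun c => sface Q k'.+1 0 (Lp k'.+2 (h k'.+1 c)) + Lp k'.+1 (h k' (sface D k' 0 c))
  end.

Lemma addsubACA (V : zmodType) (a b c d : V) : (a - b) + (c - d) = (a + c) - (b + d).
Proof. by rewrite opprD addrACA. Qed.

Lemma inND (E : sAb) n (x y : E n.+1) : inN x -> inN y -> inN (x + y).
Proof.
move=> Nx Ny i /andP [i0 iS]; rewrite (addfD (face_addf _ _ _ iS)) Nx ?Ny ?addr0 //; exact/andP.
Qed.

Lemma T_add k : addfun (T k).
Proof.
case: k => [|k] x y /=.
  by rewrite (h_add 0) (Lp_add 1) (face_addf _ _ _ (leq0n _)).
rewrite (h_add k.+1) (Lp_add k.+2) (face_addf _ _ _ (leq0n _)).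
rewrite (face_addf _ _ _ (leq0n _)) (h_add k) (Lp_add k.+1).
exact: addsubACA.
Qed.

Lemma T_N k c : inN (T k.+1 c).
Proof. by apply: inND; [apply: inN_d0; apply: Lp_N | apply: Lp_N]. Qed.

Lemma T_chain k c : inN c -> sface Q k 0 (T k.+1 c) = T k (sface D k 0 c).
Proof.
move=> Nc /=; rewrite (addfD (face_addf _ _ _ (leq0n _))) d0d0 ?add0r; last exact: Lp_N.
case: k c Nc => [|k] c Nc //=.
by rewrite d0d0 // (addf0 (h_add _)) (addf0 (Lp_add _)) addr0.
Qed.

Lemma f_T0 c : f 0 (T 0 c) = s 0 c.
Proof.
rewrite /= hmap_face // f_Lp; last exact: h_N.
by rewrite -(@hmap_face _ _ s) // h_c0.
Qed.

Lemma f_TS k c : (k.+1 <= m)%N -> inN c -> f k.+1 (T k.+1 c) = s k.+1 c.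
Proof.
move=> km Nc /=.
rewrite (addfD (fun x y => @hmap_add _ _ f _ x y)) hmap_face // f_Lp; last exact: h_N.
rewrite f_Lp; last exact: h_N.
rewrite -(@hmap_face _ _ s) // -(addfD (fun x y => @hmap_add _ _ s _ x y)).
by rewrite h_cS.
Qed.

Arguments T k x : simpl never.
Opaque T.

Fixpoint t n : D n -> Q n :=
  match n return D n -> Q n with
  | 0 => T 0
  | n'.+1 => fun x => T n'.+1 (Xr D n' n'.+1 x) +
       \sum_(r < n'.+1) sdeg Q n' (n' - r) (t n' (aa D n' r x))
  end.

Lemma tS n x : t n.+1 x = T n.+1 (Xr D n n.+1 x) +
       \sum_(r < n.+1) sdeg Q n (n - r) (t n (aa D n r x)).
Proof. by []. Qed.

Lemma t0 x : t 0 x = T 0 x.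
Proof. by []. Qed.

Arguments t n x : simpl never.

Lemma t_add n : addfun (t n).
Proof.
elim: n => [|n IH] x y; first by rewrite !t0 T_add.
rewrite !tS Xr_addf T_add -addsubACA; congr (_ + _).
rewrite -sumrB; apply: eq_bigr => r _.
by rewrite aa_addf IH deg_addf // leq_subr.
Qed.

Lemma tN n c : inN c -> t n.+1 c = T n.+1 c.
Proof.
move=> Nc; rewrite tS Xr_N // big1 ?addr0 // => r _.
by rewrite aa_N // (addf0 (t_add n)) deg0 // leq_subr.
Qed.

Lemma t_compat_step n : (forall k, (k < n)%N -> compat (t k) (t k.+1)) ->
  compat (t n) (t n.+1).
Proof.
move=> HF; split; try exact: t_add.
- move=> i x iS.
  rewrite [in RHS](Xr_decomp D n n.+1 x).
  rewrite tS (addfD (face_addf _ _ _ iS) (T n.+1 (Xr D n n.+1 x))).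
  rewrite (addfD (face_addf _ _ _ iS) (Xr D n n.+1 x)) (addfD (t_add n) (sface D n i (Xr D n n.+1 x))).
  rewrite !(addf_sum (face_addf _ _ _ iS)) (addf_sum (t_add n)).
  congr (_ + _); last first.
    apply: eq_bigr => r _.
    by rewrite (@fs_nat D Q t n i (n - r) _ HF) // leq_subr.
  case: i iS => [|i] iS.
    rewrite T_chain; last exact: Xr_pN.
    case: n HF x iS => [|n] HF x iS; first by rewrite t0.
    by rewrite tN //; apply: inN_d0; apply: Xr_pN.
  by rewrite T_N ?Xr_pN ?(addf0 (t_add n)).
- move=> j z jn.
  rewrite tS Xr_degz // ?(addf0 (T_add _)) ?add0r; last by lia.
  rewrite {1}(Xr_decomp Q n n.+1 (sdeg Q n j (t n z))) Xr_degz // ?add0r; last by lia.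
  apply: eq_bigr => r _.
  by rewrite (@aa_deg_nat D Q t n r j z HF (t_add n) jn).
Qed.

Lemma t_compat n : compat (t n) (t n.+1).
Proof.
have H : forall N k, (k <= N)%N -> compat (t k) (t k.+1).
  elim=> [|N IH] k kN.
    move: kN; rewrite leqn0 => /eqP ->; apply: t_compat_step => k0; by [].
  apply: t_compat_step => k' lt; apply: IH; lia.
exact: (H n).
Qed.

Lemma f_t n : (n <= m)%N -> forall x, f n (t n x) = s n x.
Proof.
elim: n => [|n IH] nm x; first by rewrite t0 f_T0.
rewrite [in RHS](Xr_decomp D n n.+1 x) tS.
rewrite (addfD (fun a b => @hmap_add _ _ f _ a b)) (addfD (fun a b => @hmap_add _ _ s _ a b)).
rewrite f_TS //; last exact: Xr_pN.
congr (_ + _).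
rewrite (addf_sum (fun a b => @hmap_add _ _ f _ a b)) (addf_sum (fun a b => @hmap_add _ _ s _ a b)).
apply: eq_bigr => r _.
by rewrite !hmap_deg ?leq_subr // IH // ltnW.
Qed.

Lemma main_sec : exists tt : sHom D Q,
    forall q (x : D q), in_skel D m q x -> f q (tt q x) = s q x.
Proof.
have fc n i : (i <= n.+1)%N -> forall x, t n (sface D n i x) = sface Q n i (t n.+1 x).
  by move=> iS x; case: (t_compat n) => _ _ hf _; rewrite hf.
have dc n i : (i <= n)%N -> forall x, t n.+1 (sdeg D n i x) = sdeg Q n i (t n x).
  by move=> iS x; case: (t_compat n) => _ _ _ hd; rewrite hd.
exists (@SHom D Q t (fun n x y => t_add n x y) fc dc) => q x.
elim=> {q x} [q x qm|q i x iS _ IH|q i x iS _ IH] /=.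
- exact: f_t.
- by rewrite fc // (@hmap_face _ _ f) // IH -(@hmap_face _ _ s).
- by rewrite dc // (@hmap_deg _ _ f) // IH -(@hmap_deg _ _ s).
Qed.

End Main.

Theorem mainTheorem8 (D Q P : sAb) (s : sHom D P) (f : sHom Q P) (m : nat) :
  sfree D -> sconnected m D -> ssurj Q P f ->
  exists t : sHom D Q,
    forall q (x : D q), in_skel D m q x -> f q (t q x) = s q x.
Proof.
move=> Hfree Hconn Hsurj.
exact: (@main_sec D Q P s f m Hfree Hconn Hsurj).
Qed.
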